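(* Let $S\neq\mathcal{C}$ be a $\mathcal{C}$-semigroup. Then $S$ is $\mathcal{C}$-irreducible if and only if $\#\max_{\le_S}\mathrm{FG}(S)=1$.
   Context: An integer cone $\mathcal{C}\subseteq\mathbb{N}^p$ is the set of integer points of a finitely generated rational cone in $\mathbb{Q}_{\ge0}^p$. A $\mathcal{C}$-semigroup is a subset $S\subseteq\mathcal{C}$ containing $0$, closed under addition, with $\mathcal{C}\setminus S$ finite; $\mathcal{H}(S)=\mathcal{C}\setminus S$. A monomial order $\preceq$ on $\mathbb{N}^p$ is fixed (total order, compatible with addition, $\mathbf 0\preceq\mathbf c$ for all $\mathbf c$); $F(S)=\max_\preceq\mathcal{H}(S)$. $\mathrm{PF}(S)=\{\mathbf x\in\mathcal{H}(S)\mid\mathbf x+(S\setminus\{0\})\subseteq S\}$; $S$ is $\mathcal{C}$-irreducible if $\mathrm{PF}(S)=\{F(S)\}$ or $\mathrm{PF}(S)=\{F(S),F(S)/2\}$. $\mathbf x\le_S\mathbf y$ means $\mathbf y-\mathbf x\in S$; $\mathrm{FG}(S)=\{\mathbf x\in\mathcal{H}(S)\mid 2\mathbf x\in S,\ 3\mathbf x\in S\}$, and $\max_{\le_S}$ denotes the set of maximal elements with respect to $\le_S$. *)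

(* Defs.v *)
From mathcomp Require Import all_boot all_order all_algebra.
Set Implicit Arguments. Unset Strict Implicit. Unset Printing Implicit Defensive.
Import GRing.Theory Num.Theory.

Definition vec (p : nat) := {ffun 'I_p -> nat}.

Definition vzero (p : nat) : vec p := [ffun _ => 0%N].
Definition vadd (p : nat) (x y : vec p) : vec p := [ffun i => (x i + y i)%N].
Definition vmuln (p : nat) (n : nat) (x : vec p) : vec p := [ffun i => (n * x i)%N].

(* C is an integer cone: the integer points (in N^p) of a finitely generated
   rational cone { sum_j lambda_j g_j | lambda_j in Q_{>=0} } with g_j in Q_{>=0}^p. *)
Definition is_integer_cone (p : nat) (C : vec p -> Prop) : Prop :=
  exists gs : seq {ffun 'I_p -> rat},
    (forall g, g \in gs -> forall i, (0 <= g i)%R) /\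
    (forall x : vec p, C x <->
       exists lam : seq rat,
         [/\ size lam = size gs,
             (forall l, l \in lam -> (0 <= l)%R) &
             forall i, ((x i)%:R : rat) = (\sum_(j < size gs) lam`_j * (nth 0 gs j) i)%R]).

Definition is_monomial_order (p : nat) (le : vec p -> vec p -> Prop) : Prop :=
  (forall x, le x x) /\
  (forall x y, le x y -> le y x -> x = y) /\
  (forall x y z, le x y -> le y z -> le x z) /\
  (forall x y, le x y \/ le y x) /\
  (forall x y z, le x y -> le (vadd x z) (vadd y z)) /\
  (forall c, le (vzero p) c).

Definition is_Csemigroup (p : nat) (C S : vec p -> Prop) : Prop :=
  [/\ (forall x, S x -> C x),
      S (vzero p),
      (forall x y, S x -> S y -> S (vadd x y)) &
      exists l : seq (vec p), forall x, C x -> ~ S x -> x \in l].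

Definition gaps (p : nat) (C S : vec p -> Prop) (x : vec p) : Prop := C x /\ ~ S x.

Definition is_Frobenius (p : nat) (le : vec p -> vec p -> Prop) (C S : vec p -> Prop)
  (f : vec p) : Prop :=
  gaps C S f /\ forall h, gaps C S h -> le h f.

Definition PF (p : nat) (C S : vec p -> Prop) (x : vec p) : Prop :=
  gaps C S x /\ forall s, S s -> s <> vzero p -> S (vadd x s).

Definition C_irreducible (p : nat) (le : vec p -> vec p -> Prop) (C S : vec p -> Prop)
  : Prop :=
  exists f, is_Frobenius le C S f /\
    ((forall x, PF C S x <-> x = f) \/
     (exists h, f = vadd h h /\ forall x, PF C S x <-> (x = f \/ x = h))).

Definition leS (p : nat) (S : vec p -> Prop) (x y : vec p) : Prop :=
  exists s, S s /\ y = vadd x s.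

Definition FG (p : nat) (C S : vec p -> Prop) (x : vec p) : Prop :=
  gaps C S x /\ S (vmuln 2 x) /\ S (vmuln 3 x).

Definition maxFG (p : nat) (C S : vec p -> Prop) (x : vec p) : Prop :=
  FG C S x /\ forall y, FG C S y -> leS S x y -> y = x.

(* Main.v *)
Require Import Defs.
From mathcomp Require Import all_boot all_order all_algebra.
From mathcomp Require Import zify.
From Stdlib Require Import Classical.
Set Implicit Arguments. Unset Strict Implicit. Unset Printing Implicit Defensive.
Import GRing.Theory Num.Theory.

Section Vec.
Variable p : nat.
Implicit Types x y z : vec p.

Lemma vaddC x y : vadd x y = vadd y x.
Proof. by apply/ffunP=> i; rewrite !ffunE addnC. Qed.
Lemma vaddA x y z : vadd x (vadd y z) = vadd (vadd x y) z.
Proof. by apply/ffunP=> i; rewrite !ffunE addnA. Qed.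
Lemma vadd0l x : vadd (vzero p) x = x.
Proof. by apply/ffunP=> i; rewrite !ffunE. Qed.
Lemma vadd0r x : vadd x (vzero p) = x.
Proof. by apply/ffunP=> i; rewrite !ffunE addn0. Qed.
Lemma vaddI x y z : vadd x y = vadd x z -> y = z.
Proof. move=> h; apply/ffunP=> i; have := congr1 (fun g : vec p => g i) h; rewrite /= !ffunE; lia. Qed.
Lemma vadd_eq0r x y : vadd x y = vzero p -> y = vzero p.
Proof. move=> h; apply/ffunP=> i; have := congr1 (fun g : vec p => g i) h; rewrite /= !ffunE; lia. Qed.
Lemma vaddK0 x y : vadd x y = x -> y = vzero p.
Proof. move=> h; apply: (@vaddI x); by rewrite vadd0r. Qed.
Lemma vmuln0 x : vmuln 0 x = vzero p.
Proof. by apply/ffunP=> i; rewrite !ffunE. Qed.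
Lemma vmulnS n x : vmuln n.+1 x = vadd x (vmuln n x).
Proof. by apply/ffunP=> i; rewrite !ffunE mulSn. Qed.
Lemma vmuln1 x : vmuln 1 x = x.
Proof. by apply/ffunP=> i; rewrite !ffunE mul1n. Qed.
Lemma vmuln2 x : vmuln 2 x = vadd x x.
Proof. apply/ffunP=> i; rewrite !ffunE; lia. Qed.
Lemma vmulnD m n x : vmuln (m + n) x = vadd (vmuln m x) (vmuln n x).
Proof. by apply/ffunP=> i; rewrite !ffunE mulnDl. Qed.
Lemma vmulnDr n x y : vmuln n (vadd x y) = vadd (vmuln n x) (vmuln n y).
Proof. by apply/ffunP=> i; rewrite !ffunE mulnDr. Qed.
Lemma vmulnA m n x : vmuln m (vmuln n x) = vmuln (m * n) x.
Proof. by apply/ffunP=> i; rewrite !ffunE mulnA. Qed.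
Lemma vmuln_eq0 n x : 0 < n -> vmuln n x = vzero p -> x = vzero p.
Proof. move=> hn h; apply/ffunP=> i; have := congr1 (fun g : vec p => g i) h; rewrite /= !ffunE; nia. Qed.

Definition vsum x := (\sum_(i < p) x i)%N.
Lemma vsumD x y : vsum (vadd x y) = vsum x + vsum y.
Proof. rewrite /vsum -big_split /=; apply: eq_bigr => i _; by rewrite ffunE. Qed.
Lemma vsumM n x : vsum (vmuln n x) = n * vsum x.
Proof. rewrite /vsum big_distrr /=; apply: eq_bigr => i _; by rewrite ffunE. Qed.
Lemma vsum_gt0 x : x <> vzero p -> 0 < vsum x.
Proof.
move=> hx; rewrite lt0n; apply/negP => /eqP h; apply: hx.
apply/ffunP => i; rewrite ffunE; move: h; rewrite /vsum (bigD1 i) //=; lia.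
Qed.
End Vec.

Lemma sum_bound p (l : seq (vec p)) g : g \in l -> vsum g <= \sum_(h <- l) vsum h.
Proof.
elim: l => [//|a l IH]; rewrite in_cons big_cons => /orP [/eqP ->|/IH]; lia.
Qed.

Lemma cone_add p (C : vec p -> Prop) : is_integer_cone C ->
  forall x y, C x -> C y -> C (vadd x y).
Proof.
case=> gs [hpos hiff] x y /hiff [l1 [s1 n1 e1]] /hiff [l2 [s2 n2 e2]].
apply/hiff; exists (mkseq (fun j => l1`_j + l2`_j)%R (size gs)); split.
- by rewrite size_mkseq.
- rewrite /mkseq => l /mapP [j _ ->].
  have nn : forall (l0 : seq rat), (forall a, a \in l0 -> (0 <= a)%R) ->
      forall j, (0 <= l0`_j)%R.
    move=> l0 h j0; case: (ltnP j0 (size l0)) => hj; first by apply/h/mem_nth.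
    by rewrite nth_default.
  by apply: addr_ge0; apply: nn.
- move=> i; rewrite ffunE natrD e1 e2 -big_split /=; apply: eq_bigr => j _.
  by rewrite nth_mkseq // mulrDl.
Qed.

Section Main.
Variables (p : nat) (C S : vec p -> Prop) (le : vec p -> vec p -> Prop).
Hypothesis hC : is_integer_cone C.
Hypothesis hle : is_monomial_order le.
Hypothesis hS : is_Csemigroup C S.

Lemma SC x : S x -> C x. Proof. by case: hS => h _ _ _; apply: h. Qed.
Lemma S0 : S (vzero p). Proof. by case: hS. Qed.
Lemma Sadd x y : S x -> S y -> S (vadd x y). Proof. by case: hS => _ _ h _; apply: h. Qed.
Lemma Cadd x y : C x -> C y -> C (vadd x y). Proof. exact: cone_add. Qed.
Lemma Cmul n x : C x -> C (vmuln n x).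
Proof.
move=> cx; elim: n => [|n ih]; first by rewrite vmuln0; apply/SC/S0.
rewrite vmulnS; exact: Cadd.
Qed.
Lemma Smul n x : S x -> S (vmuln n x).
Proof.
move=> cx; elim: n => [|n ih]; first by rewrite vmuln0; apply/S0.
rewrite vmulnS; exact: Sadd.
Qed.
Lemma gap_nz x : gaps C S x -> x <> vzero p.
Proof. by move=> [_ h] e; apply: h; rewrite e; apply: S0. Qed.

Lemma le_refl x : le x x. Proof. by case: hle. Qed.
Lemma le_anti x y : le x y -> le y x -> x = y.
Proof. by case: hle => _ [h _]; apply: h. Qed.
Lemma le_tr x y z : le x y -> le y z -> le x z.
Proof. by case: hle => _ [_ [h _]]; apply: h. Qed.
Lemma le_tot x y : le x y \/ le y x.
Proof. by case: hle => _ [_ [_ [h _]]]; apply: h. Qed.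
Lemma le_addr x t : le x (vadd x t).
Proof.
case: hle => _ [_ [_ [_ [ha h0]]]].
have := ha _ _ x (h0 t); by rewrite vadd0l vaddC.
Qed.

Lemma exists_max (l : seq (vec p)) (P : vec p -> Prop) :
  (forall g, P g -> g \in l) -> (exists g, P g) ->
  exists f, P f /\ forall h, P h -> le h f.
Proof.
elim: l P => [|a l IH] P hl [g Pg]; first by have := hl g Pg.
case: (classic (exists g, P g /\ g <> a)) => [[g' [Pg' ne]]|hno].
- have [f [[Pf nf] hf]] : exists f, (P f /\ f <> a) /\ forall h, (P h /\ h <> a) -> le h f.
    apply: IH; last by exists g'.
    move=> h [Ph nh]; move: (hl h Ph); rewrite in_cons => /orP [/eqP e|//].
    by case: nh.
  case: (classic (P a)) => Pa.
  + case: (le_tot a f) => haf.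
    * exists f; split => // h Ph; case: (classic (h = a)) => [->//|nh]; exact: hf.
    * exists a; split => // h Ph; case: (classic (h = a)) => [->|nh]; first exact: le_refl.
      exact: le_tr (hf h (conj Ph nh)) haf.
  + exists f; split => // h Ph; apply: hf; split => // e; apply: Pa; by rewrite -e.
- have Pa : P a.
    apply: NNPP => Pa; apply: hno; exists g; split => // e; apply: Pa; by rewrite -e.
  exists a; split => // h Ph; case: (classic (h = a)) => [->|nh]; first exact: le_refl.
  by exfalso; apply: hno; exists h.
Qed.

Lemma above_F f t : is_Frobenius le C S f -> C (vadd f t) -> t <> vzero p ->
  S (vadd f t).
Proof.
move=> [gf hf] ct nt; apply: NNPP => ns.
have e := le_anti (hf _ (conj ct ns)) (le_addr f t).
by apply: nt; apply: (vaddK0 e).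
Qed.

Lemma F_PF f : is_Frobenius le C S f -> PF C S f.
Proof.
move=> Ff; split; first by case: Ff.
move=> s Ss ns; apply: above_F => //; apply: Cadd => //; first by case: Ff => [[]].
exact: SC.
Qed.

Lemma F_maxFG f : is_Frobenius le C S f -> maxFG C S f.
Proof.
move=> Ff; have [[cf nsf] hf] := Ff.
have nz := gap_nz (conj cf nsf).
split; first split; first by [].
- split.
  + rewrite vmuln2; apply: above_F => //; exact: Cadd.
  + rewrite vmulnS; apply: above_F => //; first by apply: Cadd => //; apply: Cmul.
    by move/(vmuln_eq0 (isT : 0 < 2)).
- move=> y FGy [s [Ss ey]]; subst y; case: FGy => [[cy nsy] _].
  case: (classic (s = vzero p)) => [->|ns]; first by rewrite vadd0r.
  exfalso; apply: nsy; apply: above_F => //.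
Qed.

Lemma PF_mul x n s : PF C S x -> S s -> s <> vzero p -> S (vadd (vmuln n x) s).
Proof.
move=> [_ hx] Ss ns; elim: n => [|n ih]; first by rewrite vmuln0 vadd0l.
rewrite vmulnS -vaddA; apply: hx => //; by move/vadd_eq0r.
Qed.

Lemma PF_up x n d : PF C S x -> 0 < n -> S (vmuln n x) -> S (vmuln (d + n) x).
Proof.
move=> hx hn Sn; rewrite vmulnD; apply: PF_mul => //.
have gx : gaps C S x by case: hx.
by move/(vmuln_eq0 hn); apply: gap_nz.
Qed.

Theorem main_thm : ~ (forall x, S x <-> C x) ->
  (C_irreducible le C S <-> exists! x, maxFG C S x).
Proof.
move=> hne.
have [l hl] : exists l : seq (vec p), forall x, C x -> ~ S x -> x \in l by case: hS.
have hlg : forall g, gaps C S g -> g \in l by move=> g [cg ng]; apply: hl.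
set B := \sum_(h <- l) vsum h.
have gB : forall g, gaps C S g -> vsum g <= B by move=> g /hlg; apply: sum_bound.
have [f Ff] : exists f, is_Frobenius le C S f.
  apply: (exists_max hlg); apply: NNPP => hn; apply: hne => x; split; first exact: SC.
  by move=> cx; apply: NNPP => nsx; apply: hn; exists x.
have Fm := F_maxFG Ff.
have [[cf nsf] hf] := Ff.
split.
- move=> [f' [Ff' hPF]]; exists f'; split; first exact: F_maxFG.
  move=> x [[[cx nsx] [S2 S3]] hmx].
  have PFx : PF C S x.
    split => // s Ss ns; apply: NNPP => nS.
    have cz : C (vadd x s) by apply: Cadd => //; apply: SC.
    have FGz : FG C S (vadd x s).
      split; first by split.
      rewrite !vmulnDr; split; apply: Sadd => //; exact: Smul.
    have := hmx _ FGz (ex_intro _ s (conj Ss erefl)).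
    by move/vaddK0.
  case: hPF => [h|[h [ef h2]]]; first by rewrite (proj1 (h x) PFx).
  case: (proj1 (h2 x) PFx) => [->//|ex].
  by exfalso; case: Ff' => [[_ nf'] _]; apply: nf'; rewrite ef -ex -vmuln2.
- move=> [m [hm huniq]].
  have mf : m = f := huniq f Fm.
  have below : forall y, FG C S y -> leS S y f.
    have chain : forall n y, FG C S y -> B - vsum y <= n -> exists m, maxFG C S m /\ leS S y m.
      elim => [|n IH] y FGy hn; (case: (classic (maxFG C S y)) => hmax;
        [by exists y; split => //; exists (vzero p); split; [apply: S0|rewrite vadd0r]|]);
      (have [z [FGz [[s [Ss ez]] nz]]] : exists z, FG C S z /\ leS S y z /\ z <> y by
        apply: NNPP => hn'; apply: hmax; split => // z FGz lez; apply: NNPP => nz;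
        apply: hn'; exists z);
      have ns : s <> vzero p by move=> e; apply: nz; rewrite ez e vadd0r.
      + have := gB z (proj1 FGz); have := vsum_gt0 ns; rewrite ez vsumD; lia.
      + have [m' [hm' [t [St et]]]] : exists m, maxFG C S m /\ leS S z m.
          apply: (IH z FGz).
          have := gB z (proj1 FGz); have := vsum_gt0 ns; rewrite ez vsumD; lia.
        exists m'; split => //; exists (vadd s t); split; first exact: Sadd.
        by rewrite et ez vaddA.
    move=> y FGy; have [m' [hm' lm']] := chain _ y FGy (leqnn _).
    by have := huniq m' hm'; rewrite mf => ->.
  have key : forall x, PF C S x -> x <> f -> vadd x x = f.
    move=> x PFx nxf.
    have [[cx nsx] hx] := PFx.
    have xnz : x <> vzero p by apply: gap_nz.
    have gx0 := vsum_gt0 xnz.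
    have [k [k1 [nSk Sk1]]] : exists k, 0 < k /\ ~ S (vmuln k x) /\ S (vmuln k.+1 x).
      have gen : forall d n, B - n <= d -> 0 < n -> ~ S (vmuln n x) ->
          exists k, 0 < k /\ ~ S (vmuln k x) /\ S (vmuln k.+1 x).
        elim => [|d IH] n hd hn nS; (case: (classic (S (vmuln n.+1 x))) => Sn1;
          [by exists n|]);
        have := gB _ (conj (Cmul n.+1 cx) Sn1); rewrite vsumM => hb.
        + exfalso; nia.
        + apply: (IH n.+1) => //; nia.
      apply: (gen B 1) => //; [lia | by rewrite vmuln1].
    have Sbig : forall m, k < m -> S (vmuln m x).
      move=> m0 km; rewrite -(subnK km); exact: PF_up.
    have FGk : forall j, 0 < j -> j <= k -> k < 2 * j -> ~ S (vmuln j x) ->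
        FG C S (vmuln j x).
      move=> j j0 jk kj nSj; split; first by split => //; apply: Cmul.
      rewrite !vmulnA; split; apply: Sbig; lia.
    have [s [Ss ef]] := below _ (FGk k k1 (leqnn _) ltac:(lia) nSk).
    case: (classic (s = vzero p)) => ns; last first.
      by exfalso; apply: nsf; rewrite ef; apply: PF_mul.
    rewrite ns vadd0r in ef.
    case: (ltngtP k 2) => hk.
    + have k_1 : k = 1 by lia.
      by exfalso; apply: nxf; rewrite ef k_1 vmuln1.
    + exfalso.
      have nSk1 : ~ S (vmuln k.-1 x).
        move=> Sk'; apply: nSk; have := PF_up 1 PFx (ltac:(lia) : 0 < k.-1) Sk'.
        by rewrite add1n prednK.
      have [t [St et]] := below _ (FGk k.-1 ltac:(lia) ltac:(lia) ltac:(lia) nSk1).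
      have ek : vmuln k x = vadd (vmuln k.-1 x) x by rewrite -{1}(prednK k1) vmulnS vaddC.
      rewrite ef ek in et; have := vaddI et => tx.
      by apply: nsx; rewrite tx.
    + by rewrite ef hk vmuln2.
  exists f; split => //.
  case: (classic (exists x, PF C S x /\ x <> f)) => [[x [PFx nxf]]|hno].
  + right; exists x; split; first by rewrite key.
    move=> z; split.
    * move=> PFz; case: (classic (z = f)) => [->|nzf]; first by left.
      right; have e1 := key z PFz nzf; have e2 := key x PFx nxf.
      apply/ffunP => i; have := congr1 (fun g : vec p => g i) e1; have := congr1 (fun g : vec p => g i) e2.
      rewrite /= !ffunE; lia.
    * by case=> ->; [apply: F_PF|].
  + left => x; split; last by move=> ->; apply: F_PF.
    move=> PFx; apply: NNPP => nxf; apply: hno; by exists x.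
Qed.
End Main.

Theorem mainTheorem17 (p : nat) (C S : vec p -> Prop) (le : vec p -> vec p -> Prop) :
  is_integer_cone C -> is_monomial_order le -> is_Csemigroup C S ->
  ~ (forall x, S x <-> C x) ->
  (C_irreducible le C S <-> exists! x, maxFG C S x).
Proof. move=> hC hle hS; exact: main_thm. Qed.
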